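(* Let $\boldsymbol X$ be an $n\times d$ data matrix and let $\widehat{\boldsymbol\Sigma}$ be a covariance estimator, i.e. a map assigning to every $n\times d$ data matrix a symmetric positive semidefinite $d\times d$ matrix, satisfying: whenever all rows of a data matrix lie in a lower-dimensional affine subspace of $\mathbb R^d$, the estimate $\widehat{\boldsymbol\Sigma}$ of that data matrix is singular. Then the cellwise implosion breakdown value satisfies $$\varepsilon^-_n(\widehat{\boldsymbol\Sigma},\boldsymbol X)\leqslant \left\lceil\frac{n-1}{d}\right\rceil\Big/n .$$
   Context: For an integer $m\ge0$, $\boldsymbol X^m$ denotes any matrix obtained from $\boldsymbol X$ by replacing at most $m$ cells in each column by arbitrary real values. The cellwise implosion breakdown value is $\varepsilon^-_n(\widehat{\boldsymbol\Sigma},\boldsymbol X)=\min\{\tfrac{m}{n}:\ \inf_{\boldsymbol X^m}\lambda_d(\widehat{\boldsymbol\Sigma}(\boldsymbol X^m))=0\}$, where $\lambda_d$ denotes the smallest eigenvalue and the infimum is over all such corrupted matrices $\boldsymbol X^m$. *)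

(* Defs.v *)
From HB Require Import structures.
From mathcomp Require Import all_boot all_order all_algebra.
From mathcomp Require Import classical_sets reals.
Set Implicit Arguments. Unset Strict Implicit. Unset Printing Implicit Defensive.
Import Order.TTheory GRing.Theory Num.Theory.
Local Open Scope ring_scope.
Local Open Scope classical_set_scope.

Section Defs.
Variable R : realType.

Definition psd_sym (d : nat) (A : 'M[R]_d) : Prop :=
  A^T = A /\ forall v : 'cV[R]_d, 0 <= (v^T *m A *m v) 0 0.

Definition lambda_min (d : nat) (A : 'M[R]_d) : R :=
  inf [set a : R | eigenvalue A a].

Definition rows_in_lower_dim_affine (n d : nat) (X : 'M[R]_(n, d)) : Prop :=
  exists (a : 'rV[R]_d) (V : 'M[R]_d),
    (\rank V < d)%N /\ forall i : 'I_n, (row i X - a <= V)%MS.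

Definition cellwise_corrupted (n d m : nat) (X Y : 'M[R]_(n, d)) : Prop :=
  forall j : 'I_d, (#|[set i : 'I_n | Y i j != X i j]| <= m)%N.

Definition covariance_estimator (n d : nat) (Sigma : 'M[R]_(n, d) -> 'M[R]_d) : Prop :=
  forall Y, psd_sym (Sigma Y).

Definition inf_lambda_corrupt (n d m : nat) (Sigma : 'M[R]_(n, d) -> 'M[R]_d)
    (X : 'M[R]_(n, d)) : R :=
  inf [set lambda_min (Sigma Y) | Y in [set Y | cellwise_corrupted m X Y]].

Definition implosion_breakdown (n d : nat) (Sigma : 'M[R]_(n, d) -> 'M[R]_d)
    (X : 'M[R]_(n, d)) : R :=
  inf [set (m%:R / n%:R) | m in [set m : nat | inf_lambda_corrupt m Sigma X = 0]].

End Defs.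

(* Main.v *)
Require Import Defs.
From HB Require Import structures.
From mathcomp Require Import all_boot all_order all_algebra.
From mathcomp Require Import classical_sets reals boolp.
From mathcomp Require Import zify.
Import Order.TTheory GRing.Theory Num.Theory.
Local Open Scope ring_scope.

Lemma card_grp N m j D : (N.-1 <= m * D)%N ->
  (#|[set i : 'I_N | (0 < i)%N && ((i.-1) %/ m == j)%N]| <= m)%N.
Proof.
move=> hN.
rewrite cardE -(size_map val) -[X in (_ <= X)%N](size_iota (j * m).+1 m).
apply: uniq_leq_size.
  by rewrite map_inj_uniq ?enum_uniq //; exact: val_inj.
move=> x /mapP [i]; rewrite mem_enum inE => /andP [i0 /eqP ij] ->.
rewrite mem_iota -[\val i]/(nat_of_ord i).
have hi := ltn_ord i.
case: (posnP m) => [m0|mp].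
  subst m; rewrite mul0n in hN. lia.
have := divn_eq (i.-1) m; have := ltn_pmod (i.-1) mp.
rewrite ij.
set r := (i.-1 %% m)%N. set q := (j * m)%N.
idtac. lia.
Qed.

Lemma construct (R : realType) n' d' (X : 'M[R]_(n'.+1, d'.+1)) m :
  (n' <= m * d'.+1)%N ->
  exists Y, cellwise_corrupted m X Y /\ rows_in_lower_dim_affine Y.
Proof.
move=> hm.
pose s := \sum_l X ord0 l.
pose c (i : 'I_n'.+1) := s - \sum_l X i l.
pose g (i : 'I_n'.+1) : 'I_d'.+1 := inord ((i.-1) %/ m).
pose Y := \matrix_(i, k) (X i k + ((0 < i)%N && (k == g i))%:R * c i).
exists Y; split.
  move=> j.
  apply: (leq_trans _ (@card_grp n'.+1 m (val j) _ hm)).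
  have sub : [set i | Y i j != X i j]%classic \subset [set i : 'I_n'.+1 | (0 < i)%N && ((i.-1) %/ m == val j)%N].
    apply/fintype.subsetP => i /set_mem /=; rewrite mxE inE.
    have [/andP [i0 /eqP ji]|nc] := boolP ((0 < i)%N && (j == g i)).
      move=> _; rewrite i0 /= ji /g inordK //.
      case: (posnP m) => [m0|mp].
        by subst m; rewrite divn0.
      rewrite ltn_divLR //.
      have := ltn_ord i; rewrite -[\val i]/(nat_of_ord i); lia.
    by rewrite mul0r addr0 eqxx.
  exact: subset_leq_card.
exists (row ord0 X), (kermx (const_mx 1 : 'M[R]_(d'.+1, 1))); split.
  rewrite mxrank_ker.
  have : \rank (const_mx 1 : 'M[R]_(d'.+1, 1)) != 0%N.
    rewrite mxrank_eq0; apply/eqP => /matrixP /(_ ord0 ord0).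
    by rewrite !mxE => /eqP; rewrite oner_eq0.
  lia.
move=> i; rewrite sub_kermx; apply/eqP/matrixP => a b.
rewrite !mxE ord1.
under eq_bigr => k _ do rewrite !mxE mulr1.
rewrite sumrB.
under eq_bigr => k _ do rewrite addrC.
rewrite big_split /=.
suff -> : \sum_(k < d'.+1) ((0 < i)%N && (k == g i))%:R * c i = c i - (if (0 < i)%N then 0 else c i).
  case: (posnP i) => [i0|ip] /=.
    have -> : i = ord0 by apply: val_inj.
    by rewrite subrr add0r subrr.
  by rewrite subr0 /c /s subrK subrr.
case: (posnP i) => [i0|ip] /=.
  by rewrite big1 ?subrr // => k _; rewrite mul0r.
rewrite subr0 (bigD1 (g i)) //= eqxx mul1r big1 ?addr0 // => k /negbTE ->.
by rewrite mul0r.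
Qed.

Local Open Scope classical_set_scope.

Lemma eig_ge0 (R : realType) d (A : 'M[R]_d) a : psd_sym A -> eigenvalue A a -> 0 <= a.
Proof.
move=> [_ hA] /eigenvalueP [v hv v0].
have := hA v^T; rewrite trmxK hv -scalemxAl mxE.
have hs : 0 < (v *m v^T) 0 0.
  rewrite mxE lt_def sumr_ge0 ?andbT; last by move=> k _; rewrite !mxE -expr2 sqr_ge0.
  apply: contra v0 => /eqP h; apply/eqP/rowP => k.
  have hk : v 0 k * v^T k 0 = 0.
    by apply: (psumr_eq0P _ h) => // l _; rewrite !mxE -expr2 sqr_ge0.
  move: hk; rewrite !mxE => /eqP; rewrite mulf_eq0 orbb => /eqP.
  by [].
by rewrite pmulr_lge0.
Qed.

Lemma lam_ge0 (R : realType) d (A : 'M[R]_d) : psd_sym A -> 0 <= lambda_min A.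
Proof.
move=> hA; rewrite /lambda_min.
have [[a ha]|ne] := pselect (exists a, eigenvalue A a).
  apply: lb_le_inf; first by exists a.
  by move=> b /= hb; exact: eig_ge0 hA hb.
have -> : [set a : R | eigenvalue A a] = set0.
  by apply/seteqP; split => // a /= ha; apply: ne; exists a.
by rewrite inf0.
Qed.

Lemma lam_eq0 (R : realType) d (A : 'M[R]_d) : psd_sym A -> \det A = 0 -> lambda_min A = 0.
Proof.
move=> hA hdet.
have e0 : eigenvalue A 0.
  apply/eigenvalueP; have /det0P [v v0 hv] : \det A == 0 by apply/eqP.
  by exists v; rewrite ?scale0r.
apply/le_anti; rewrite lam_ge0 // andbT.
apply: ge_inf => //; exists 0 => b /= hb; exact: eig_ge0 hA hb.
Qed.

Theorem proposition2 (R : realType) (n d : nat) (hn : (0 < n)%N) (hd : (0 < d)%N)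
    (Sigma : 'M[R]_(n, d) -> 'M[R]_d) (X : 'M[R]_(n, d))
    (hSigma : covariance_estimator Sigma)
    (hsing : forall Y : 'M[R]_(n, d), rows_in_lower_dim_affine Y -> \det (Sigma Y) = 0) :
  implosion_breakdown Sigma X
    <= (Num.ceil ((n%:R - 1) / d%:R : R))%:~R / n%:R.
Proof.
case: n hn Sigma X hSigma hsing => // n' _.
case: d hd => // d' _ Sigma X hSigma hsing.
set x := ((n'.+1%:R - 1) / d'.+1%:R : R).
have x0 : 0 <= x by rewrite /x divr_ge0 // -natr1 addrK.
have c0 : (0 <= Num.ceil x)%R by rewrite ceil_ge0 (lt_le_trans _ x0) // ltrN10.
set m := `|Num.ceil x|%N.
have hmR : (m%:R : R) = (Num.ceil x)%:~R by rewrite /m natr_absz ger0_norm.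
have hm : (n' <= m * d'.+1)%N.
  have := ceil_ge x; rewrite -hmR /x ler_pdivrMr ?ltr0Sn // -natr1 addrK -natrM ler_nat.
  by [].
have key : inf_lambda_corrupt m Sigma X = 0.
  have [Y [hY hYa]] := @construct R n' d' X m hm.
  rewrite /inf_lambda_corrupt; apply/le_anti/andP; split.
    apply: ge_inf.
      exists 0 => _ [Z _ <-]; exact: lam_ge0 (hSigma Z).
    by exists Y => //; apply: lam_eq0 => //; exact: hsing.
  apply: lb_le_inf.
    exists (lambda_min (Sigma X)); exists X => //.
    move=> j; rewrite eq_card0 // => i; apply/negbTE/negP => /set_mem /=.
    by rewrite eqxx.
  move=> _ [Z _ <-]; exact: lam_ge0 (hSigma Z).
rewrite /implosion_breakdown -hmR.
apply: ge_inf; last by exists m.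
exists 0 => _ [k _ <-]; by rewrite divr_ge0.
Qed.
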